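(* Let $k$ be an algebraically closed field of characteristic $0$, let $d\ge 3$ and $n\ge 2$ be integers, and let $(V_n,\Theta_d)$ be the $d$-linear space over $k$ with basis $v_1,\dots,v_n$ of $V_n$ and $\Theta_d(v_{i_1},\dots,v_{i_d})=1$ if $i_1+\dots+i_d=(d-1)n+1$ and $=0$ otherwise. Let $\mathcal{O}(\Theta_d)$ be its orthogonal group, $\mathrm{Cent}_k(\Theta_d)$ its center, $\mathbf{G}$ the group of $k$-algebra automorphisms of $\mathrm{Cent}_k(\Theta_d)$, and $\chi:\mathcal{O}(\Theta_d)\to\mathbf{G}$ the homomorphism $\chi(\sigma)(f)=\sigma f\sigma^{-1}$. Let $\mu_d=\{\zeta\in k:\zeta^d=1\}$, identified with the subgroup $\{\zeta\,\mathrm{id}_{V_n}\}$ of $\mathcal{O}(\Theta_d)$. Then $$1\longrightarrow\mu_d\longrightarrow\mathcal{O}(\Theta_d)\xrightarrow{\ \chi\ }\mathbf{G}\longrightarrow 1$$ is a short exact sequence of groups.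
   Context: A $d$-linear space over $k$ is a pair $(V,\Theta)$ with $V$ a finite-dimensional $k$-vector space and $\Theta:V^d\to k$ a symmetric $d$-linear form. Its center is $\mathrm{Cent}_k(\Theta)=\{f\in\mathrm{End}_k(V):\Theta(f(u_1),u_2,\dots,u_d)=\Theta(u_1,f(u_2),\dots,u_d)\ \forall u_i\in V\}$, a commutative subalgebra of $\mathrm{End}_k(V)$. The orthogonal group is $\mathcal{O}(\Theta)=\{\sigma\in GL_k(V):\Theta(\sigma u_1,\dots,\sigma u_d)=\Theta(u_1,\dots,u_d)\ \forall u_i\}$; conjugation by elements of $\mathcal{O}(\Theta)$ preserves $\mathrm{Cent}_k(\Theta)$. The linear map $\psi(v_i)=v_{i-1}$ (with $v_0=0$) lies in $\mathrm{Cent}_k(\Theta_d)$. *)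

(* Defs.v *)
From HB Require Import structures.
From mathcomp Require Import all_boot all_order all_algebra.
Set Implicit Arguments. Unset Strict Implicit. Unset Printing Implicit Defensive.
Import GRing.Theory.
Local Open Scope ring_scope.

(* V_n = k^n as column vectors 'cV[k]_n, basis vector v_{i+1} = delta at i (0-based).
   A d-tuple of vectors is given as u : nat -> 'cV_n (only u 0 .. u (d-1) matter). *)

(* Theta_d(u_0,...,u_{d-1}) = sum over index tuples (0-based) with
   sum = (d-1)(n-1), i.e. 1-based sum = (d-1)n+1, of the products of coordinates. *)
Definition Theta (k : fieldType) (d n : nat) (u : nat -> 'cV[k]_n) : k :=
  \sum_(t : {ffun 'I_d -> 'I_n} | (\sum_(j < d) (t j : nat))%N == ((d - 1) * (n - 1))%N)
     \prod_(j < d) u j (t j) ord0.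

Definition upd (k : fieldType) (n : nat) (i : nat) (f : 'M[k]_n) (u : nat -> 'cV[k]_n) :
  nat -> 'cV[k]_n := fun j => if j == i then f *m u j else u j.

Definition Cent (k : fieldType) (d n : nat) (f : 'M[k]_n) : Prop :=
  forall u : nat -> 'cV[k]_n, Theta d (upd 0 f u) = Theta d (upd 1 f u).

Definition Orth (k : fieldType) (d n : nat) (s : 'M[k]_n) : Prop :=
  s \in unitmx /\ forall u : nat -> 'cV[k]_n, Theta d (fun j => s *m u j) = Theta d u.

(* phi (a function on matrices, relevant only on Cent) is a k-algebra
   automorphism of Cent_k(Theta_d) *)
Definition CentAut (k : fieldType) (d n : nat) (phi : 'M[k]_n -> 'M[k]_n) : Prop :=
  (forall f, Cent d f -> Cent d (phi f)) /\ [/\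
      forall f g, Cent d f -> Cent d g -> phi f = phi g -> f = g,
      forall g, Cent d g -> exists2 f, Cent d f & phi f = g,
      phi 1%:M = 1%:M,
      forall a f g, Cent d f -> Cent d g -> phi (a *: f + g) = a *: phi f + phi g
    & forall f g, Cent d f -> Cent d g -> phi (f *m g) = phi f *m phi g].

Definition chi (k : fieldType) (n : nat) (s : 'M[k]_n) : 'M[k]_n -> 'M[k]_n :=
  fun f => s *m f *m invmx s.

(* Main.v *)
Require Import Defs.
From HB Require Import structures.
From mathcomp Require Import all_boot all_order all_algebra.
From mathcomp Require Import zify ring.
Import GRing.Theory.
Local Open Scope ring_scope.

Module M_A.
Set Implicit Arguments. Unset Strict Implicit. Unset Printing Implicit Defensive.
Local Open Scope ring_scope.

Section Trunc.
Variable k : fieldType.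
Variable n : nat.

Definition Nm : 'M[k]_n.+1 := \matrix_(i, j) ((j : nat) == i.+1)%:R.
Definition Ev : 'cV[k]_n.+1 := \col_i ((i : nat) == n)%:R.
Definition Pp (u : 'cV[k]_n.+1) : {poly k} := \poly_(m < n.+1) u (inord (n - m)) 0.
Definition Qv (p : {poly k}) : 'cV[k]_n.+1 := \col_(i < n.+1) p`_(n - i).
Definition hm (p : {poly k}) : 'M[k]_n.+1 := horner_mx Nm p.
Definition teq (p q : {poly k}) := forall m, (m < n.+1)%N -> p`_m = q`_m.

Lemma QvD p q : Qv (p + q) = Qv p + Qv q.
Proof. by apply/matrixP => i j; rewrite !mxE coefD. Qed.
Lemma QvZ a p : Qv (a *: p) = a *: Qv p.
Proof. by apply/matrixP => i j; rewrite !mxE coefZ. Qed.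
Lemma QvC a p : Qv (a%:P * p) = a *: Qv p.
Proof. by rewrite mul_polyC QvZ. Qed.

Lemma Nm_Q g : Nm *m Qv g = Qv ('X * g).
Proof.
apply/matrixP => i j; rewrite !mxE coefXM.
case: (ltnP i n) => hi.
  have hi1 : (i.+1 < n.+1)%N by [].
  rewrite (bigD1 (Ordinal hi1)) //= !mxE eqxx mul1r big1 ?addr0.
    have -> : (n - i == 0)%N = false by apply/negbTE; rewrite subn_eq0 -ltnNge.
    by congr (g`_ _); rewrite subnS.
  move=> j' hj'; rewrite !mxE.
  case: eqP => [e|]; last by rewrite mul0r.
  by exfalso; move/eqP: hj'; apply; apply/val_inj.
have -> : (n - i == 0)%N by rewrite subn_eq0.
rewrite big1 // => j' _; rewrite !mxE.
case: eqP => [e|]; last by rewrite mul0r.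
by have := ltn_ord j'; rewrite e; move: (ltn_ord i) hi; lia.
Qed.

Lemma hmQ p g : hm p *m Qv g = Qv (p * g).
Proof.
elim/poly_ind: p g => [|p c IH] g.
  by rewrite /hm rmorph0 mul0mx mul0r; apply/matrixP => i j; rewrite !mxE coef0.
rewrite /hm rmorphD rmorphM /= horner_mx_X horner_mx_C -mulmxE -/(hm p).
rewrite mulmxDl -mulmxA Nm_Q IH mul_scalar_mx -QvC -QvD.
by rewrite mulrDl -mulrA (mulrC 'X).
Qed.

Lemma QPK u : Qv (Pp u) = u.
Proof.
apply/matrixP => i j; rewrite !mxE coef_poly ord1.
have hi : (n - i < n.+1)%N by rewrite ltnS leq_subr.
rewrite hi subKn ?inord_val //.
by rewrite -ltnS.
Qed.

Lemma coefPp u m : (Pp u)`_m = if (m < n.+1)%N then u (inord (n - m)) 0 else 0.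
Proof. by rewrite coef_poly. Qed.

Lemma PQ p m : (Pp (Qv p))`_m = if (m < n.+1)%N then p`_m else 0.
Proof.
rewrite coefPp; case: ifP => // hm1.
rewrite !mxE inordK ?subKn //; by rewrite ?ltnS ?leq_subr // -ltnS.
Qed.

Lemma teqPQ p : teq (Pp (Qv p)) p.
Proof. by move=> m hm1; rewrite PQ hm1. Qed.

Lemma Q_teq p q : teq p q -> Qv p = Qv q.
Proof.
move=> h; apply/matrixP => i j; rewrite !mxE h //.
by rewrite ltnS leq_subr.
Qed.

Lemma teq_Q p q : Qv p = Qv q -> teq p q.
Proof.
move=> h m hm1.
have hi : (n - m < n.+1)%N by rewrite ltnS leq_subr.
move/matrixP: h => /(_ (Ordinal hi) 0); rewrite !mxE /= subKn //.
Qed.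

Lemma teq_refl p : teq p p. Proof. by []. Qed.
Lemma teq_sym p q : teq p q -> teq q p. Proof. by move=> h m hm1; rewrite h. Qed.
Lemma teq_trans p q r : teq p q -> teq q r -> teq p r.
Proof. by move=> h1 h2 m hm1; rewrite h1 ?h2. Qed.

Lemma teqMl p q r : teq p q -> teq (p * r) (q * r).
Proof.
move=> h m hm1; rewrite !coefM; apply: eq_bigr => j _; rewrite h //.
by apply: leq_ltn_trans hm1; rewrite -ltnS.
Qed.
Lemma teqMr p q r : teq p q -> teq (r * p) (r * q).
Proof. by move=> h; rewrite ![r * _]mulrC; apply: teqMl. Qed.
Lemma teqM p q p' q' : teq p q -> teq p' q' -> teq (p * p') (q * q').
Proof. by move=> h h'; apply: teq_trans (teqMl _ h) (teqMr _ h'). Qed.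

Lemma teq_prod (I : Type) (r : seq I) (F G : I -> {poly k}) :
  (forall i, teq (F i) (G i)) -> teq (\prod_(i <- r) F i) (\prod_(i <- r) G i).
Proof.
move=> h; elim: r => [|x r IH]; first by rewrite !big_nil.
by rewrite !big_cons; apply: teqM.
Qed.

Lemma mx_ext (A B : 'M[k]_n.+1) : (forall x : 'cV_n.+1, A *m x = B *m x) -> A = B.
Proof.
move=> h; apply/matrixP => i j.
have := h (delta_mx j 0); rewrite -!colE => /matrixP /(_ i 0).
by rewrite !mxE.
Qed.

Lemma hmP p u : hm p *m u = Qv (p * Pp u).
Proof. by rewrite -{1}(QPK u) hmQ. Qed.

Lemma hm_teq p q : teq p q -> hm p = hm q.
Proof. by move=> h; apply: mx_ext => x; rewrite !hmP; apply: Q_teq; apply: teqMl. Qed.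

Lemma EvQ : Ev = Qv 1.
Proof.
apply/matrixP => i j; rewrite !mxE coef1; congr (_%:R).
by apply/eqP/eqP; move: (ltn_ord i); lia.
Qed.

Lemma hmE p : hm p *m Ev = Qv p.
Proof. by rewrite EvQ hmQ mulr1. Qed.

Lemma PE : Pp Ev = 1.
Proof.
apply/polyP => m; rewrite coefPp coef1 !mxE.
case: ifP => h.
  rewrite inordK ?ltnS ?leq_subr //; congr (_%:R); apply/eqP/eqP; lia.
by case: m h.
Qed.

Lemma hm_mul p q : hm (p * q) = hm p *m hm q.
Proof. by rewrite /hm rmorphM mulmxE. Qed.

Lemma hm_comm p q : hm p *m hm q = hm q *m hm p.
Proof. by rewrite -!hm_mul mulrC. Qed.

End Trunc.

End M_A.
Import M_A.

Module M_Th.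
Set Implicit Arguments. Unset Strict Implicit. Unset Printing Implicit Defensive.
Local Open Scope ring_scope.

Section ThetaSec.
Variable k : fieldType.
Variable n : nat.

Lemma prodZX (I : Type) (r : seq I) (a : I -> k) (m : I -> nat) :
  \prod_(i <- r) (a i *: 'X^(m i)) = (\prod_(i <- r) a i) *: 'X^(\sum_(i <- r) m i).
Proof.
elim: r => [|x r IH]; first by rewrite !big_nil scale1r expr0.
rewrite !big_cons IH -!mul_polyC polyCM exprD.
by rewrite -!mulrA; congr (_ * _); rewrite mulrCA.
Qed.

Definition rvf d (t : {ffun 'I_d -> 'I_n.+1}) : {ffun 'I_d -> 'I_n.+1} :=
  [ffun j => rev_ord (t j)].

Lemma rvf_inj d : injective (@rvf d).
Proof.
move=> t1 t2 h; apply/ffunP => j.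
by move/ffunP: h => /(_ j); rewrite !ffunE => /rev_ord_inj.
Qed.

Lemma ThetaP d (u : nat -> 'cV[k]_n.+1) : (0 < d)%N ->
  Theta d u = (\prod_(j < d) Pp (u j))`_n.
Proof.
move=> hd.
have e1 : \prod_(j < d) Pp (u j) = \sum_(f : {ffun 'I_d -> 'I_n.+1})
   (\prod_(j < d) u j (inord (n - f j)) 0) *: 'X^(\sum_(j < d) (f j : nat)).
  rewrite (eq_bigr (fun j : 'I_d => \sum_(m < n.+1) u j (inord (n - m)) 0 *: 'X^m)); last first.
    by move=> j _; rewrite /Pp poly_def.
  rewrite bigA_distr_bigA; apply: eq_bigr => f _; exact: prodZX.
rewrite e1 coef_sum (reindex_inj (@rvf_inj d)) /Theta big_mkcond /=.
apply: eq_bigr => t _; rewrite coefZ coefXn.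
have et : forall j, (n - rvf t j)%N = t j.
  by move=> j; rewrite ffunE /= subSS subKn // -ltnS.
rewrite [X in _ = X * _](eq_bigr (fun j : 'I_d => u j (t j) 0)); last first.
  by move=> j _; rewrite et inord_val.
have -> : (\sum_(j < d) (rvf t j : nat) = \sum_(j < d) (n - t j))%N.
  apply: eq_bigr => j _; rewrite ffunE /=; by rewrite subSS.
rewrite sumnB; last by move=> j _; rewrite -ltnS.
rewrite sum_nat_const card_ord.
have hS : (\sum_(j < d) (t j : nat) <= \sum_(j < d) n)%N.
  by apply: leq_sum => j _; rewrite -ltnS.
rewrite sum_nat_const card_ord in hS.
set S := (\sum_(j < d) _)%N in hS *.
rewrite subSS subn0 mulnBl mul1n.
have hn : (n <= d * n)%N by rewrite leq_pmull.
set D := (d * n)%N in hS hn *.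
have -> : (S == D - n)%N = (n == D - S)%N by apply/eqP/eqP; lia.
by case: eqP; rewrite ?mulr1 ?mulr0.
Qed.

Lemma Theta_ext d (u v : nat -> 'cV[k]_n.+1) : (forall j, u j = v j) -> Theta d u = Theta d v.
Proof. by move=> h; rewrite /Theta; apply: eq_bigr => t _; apply: eq_bigr => j _; rewrite h. Qed.

End ThetaSec.

End M_Th.
Import M_Th.

Module M_C.
Set Implicit Arguments. Unset Strict Implicit. Unset Printing Implicit Defensive.
Local Open Scope ring_scope.

Section CentSec.
Variable k : fieldType.
Variable n d : nat.
Local Notation D := d.+3.

Lemma prod_upd i (hi : (i < D)%N) (F : 'I_D -> {poly k}) p :
  \prod_(j < D) (if (j : nat) == i then p * F j else F j) = p * \prod_(j < D) F j.
Proof.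
rewrite (bigD1 (Ordinal hi)) //= eqxx [in RHS](bigD1 (Ordinal hi)) //= -mulrA.
congr (_ * (_ * _)); apply: eq_bigr => j hj; rewrite ifF //.
by apply/negbTE; apply: contra hj => /eqP e; apply/eqP/val_inj.
Qed.

Lemma prod3 (F : nat -> {poly k}) : (forall j, (3 <= j)%N -> F j = 1) ->
  \prod_(j < D) F j = F 0%N * F 1%N * F 2%N.
Proof.
move=> h; rewrite !big_ord_recl big1 ?mulr1 ?mulrA // => j _; apply: h.
by rewrite /bump /=.
Qed.

Lemma P_hm p (u : 'cV[k]_n.+1) : teq n (Pp (hm n p *m u)) (p * Pp u).
Proof. by rewrite hmP; apply: teqPQ. Qed.

Lemma Theta_upd_hm i (hi : (i < D)%N) p (u : nat -> 'cV[k]_n.+1) :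
  Theta D (upd i (hm n p) u) = (p * \prod_(j < D) Pp (u j))`_n.
Proof.
rewrite ThetaP // -(prod_upd hi).
have H : teq n (\prod_(j < D) Pp (upd i (hm n p) u j))
   (\prod_(j < D) (if (j:nat) == i then p * Pp (u j) else Pp (u j))).
  apply: teq_prod => j; rewrite /upd; case: eqP => _; first exact: P_hm.
  exact: teq_refl.
by rewrite H.
Qed.

Lemma CentA (p : {poly k}) : Cent D (hm n p).
Proof. by move=> u; rewrite !Theta_upd_hm. Qed.

Lemma CentE (f : 'M[k]_n.+1) : Cent D f -> f = hm n (Pp (f *m Ev k n)).
Proof.
move=> hf; apply: mx_ext => x; rewrite hmP.
have key : forall y : 'cV[k]_n.+1, (Pp (f *m x) * Pp y)`_n = (Pp x * Pp (f *m Ev k n) * Pp y)`_n.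
  move=> y.
  pose u : nat -> 'cV[k]_n.+1 := fun j => if j == 0%N then x else if j == 2%N then y else Ev k n.
  have := hf u; rewrite !ThetaP //.
  rewrite (prod3 (F:=fun j => Pp (upd 0 f u j))); last first.
    by move=> j hj; rewrite /upd /u; case: j hj => [|[|[|j]]] //= _; rewrite PE.
  rewrite (prod3 (F:=fun j => Pp (upd 1 f u j))); last first.
    by move=> j hj; rewrite /upd /u; case: j hj => [|[|[|j]]] //= _; rewrite PE.
  by rewrite /upd /u /= PE mulr1.
rewrite -[f *m x]QPK; apply: Q_teq => m hm1.
have hm2 : (n - m < n.+1)%N by rewrite ltnS leq_subr.
have := key (Qv n 'X^(n - m)).
rewrite (teqMr _ (teqPQ _)) // (teqMr _ (teqPQ _)) //.
rewrite !coefMXn ltnNge leq_subr /= subKn; last by rewrite -ltnS.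
by rewrite mulrC.
Qed.

Lemma Theta_hm (c : {poly k}) (u : nat -> 'cV[k]_n.+1) :
  Theta D (fun j => hm n c *m u j) = (c ^+ D * \prod_(j < D) Pp (u j))`_n.
Proof.
rewrite ThetaP //.
have -> : c ^+ D * \prod_(j < D) Pp (u j) = \prod_(j < D) (c * Pp (u j)).
  by rewrite big_split /= prodr_const card_ord.
have H : teq n (\prod_(j < D) Pp (hm n c *m u j)) (\prod_(j < D) (c * Pp (u j))).
  by apply: teq_prod => j; apply: P_hm.
by rewrite H.
Qed.

Lemma Theta_one (y : 'cV[k]_n.+1) :
  Theta D (fun j => if j == 0%N then y else Ev k n) = (Pp y)`_n.
Proof.
rewrite ThetaP // (prod3 (F:=fun j => Pp (if j == 0%N then y else Ev k n))).
  by rewrite /= PE !mulr1.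
by case => [|[|[|j]]] //= _; rewrite PE.
Qed.

Lemma prod_one (y : 'cV[k]_n.+1) :
  \prod_(j < D) Pp (if (j : nat) == 0%N then y else Ev k n) = Pp y.
Proof.
rewrite (prod3 (F:=fun j => Pp (if j == 0%N then y else Ev k n))).
  by rewrite /= PE !mulr1.
by case => [|[|[|j]]] //= _; rewrite PE.
Qed.

End CentSec.

End M_C.
Import M_C.

Module M_L.
Set Implicit Arguments. Unset Strict Implicit. Unset Printing Implicit Defensive.
Local Open Scope ring_scope.

Section Lem.
Variable k : fieldType.
Variable n : nat.

Lemma ker_unit (A : 'M[k]_n.+1) : (forall x : 'cV[k]_n.+1, A *m x = 0 -> x = 0) -> A \in unitmx.
Proof.
move=> h; rewrite -unitmx_tr -row_free_unit -kermx_eq0; apply/eqP/row_matrixP => i.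
rewrite row0; have /sub_kermxP e := row_sub i (kermx A^T).
apply: trmx_inj; rewrite trmx0; apply: h.
by rewrite -[A in A *m _]trmxK -trmx_mul e trmx0.
Qed.

Lemma Qv0 : Qv n (0 : {poly k}) = 0.
Proof. by apply/matrixP => i j; rewrite !mxE coef0. Qed.

Lemma Pp0 : Pp (0 : 'cV[k]_n.+1) = 0.
Proof. by apply/polyP => m; rewrite coefPp !mxE coef0; case: ifP. Qed.

Lemma hm0 : hm n (0 : {poly k}) = 0.
Proof. by rewrite /hm rmorph0. Qed.

Lemma hm1 : hm n (1 : {poly k}) = 1%:M.
Proof. by rewrite /hm rmorph1. Qed.

Lemma teq_cancel (C g : {poly k}) : C`_0 != 0 -> teq n (g * C) 0 -> teq n g 0.
Proof.
move=> hC h; elim/ltn_ind => m IH hm1; rewrite coef0.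
have := h m hm1; rewrite coefM big_ord_recr /= subnn big1 ?add0r.
  by rewrite coef0 => /eqP; rewrite mulf_eq0 (negbTE hC) orbF => /eqP.
move=> j _; rewrite IH ?coef0 ?mul0r //.
by apply: ltn_trans hm1.
Qed.

Lemma coef_pow_low (r : {poly k}) : r`_0 = 0 -> forall m a, (a < m)%N -> (r ^+ m)`_a = 0.
Proof.
move=> h0; elim => [|m IH] a // ha.
rewrite exprS coefM big1 // => j _.
case: (posnP j) => [->|hj]; first by rewrite h0 mul0r.
rewrite IH ?mulr0 //; have := ltn_ord j; lia.
Qed.

Lemma PpE (u : 'cV[k]_n.+1) : Pp u = \sum_(j < n.+1) u j 0 *: 'X^(n - j).
Proof.
apply/polyP => m; rewrite coefPp coef_sumMXn.
case: ifP => hm1.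
  rewrite (big_pred1 (inord (n - m))) // => j /=.
  apply/eqP/eqP => [e|->]; last by rewrite inordK ?subKn // ltnS ?leq_subr // -ltnS.
  by apply/val_inj; rewrite /= inordK ?ltnS ?leq_subr // -e subKn // -ltnS.
rewrite big_pred0 // => j /=; apply/negbTE/eqP => e.
by move: hm1; rewrite -e ltnS leq_subr.
Qed.

End Lem.

Lemma droot (k : closedFieldType) (hchar : [pchar k] =i pred0) (n D : nat) (W : {poly k}) :
  (0 < D)%N -> W`_0 != 0 -> exists2 C : {poly k}, C`_0 != 0 & teq n (C ^+ D) W.
Proof.
move=> hD hW.
have [a ha] : exists a : k, a ^+ D = W`_0.
  have hs : size ('X^D - (W`_0)%:P : {poly k}) != 1%N.
    by rewrite size_XnsubC //; case: D hD.
  have [x hx] := closed_rootP _ hs; exists x.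
  by move: hx; rewrite /root hornerD hornerN hornerXn hornerC subr_eq0 => /eqP.
have ha0 : a != 0.
  by apply: contra hW => /eqP a0; rewrite -ha a0 expr0n eqn0Ngt hD.
have hDa : (D%:R * a ^+ D.-1 : k) != 0.
  by rewrite mulf_neq0 ?expf_neq0 // ((pcharf0P k).1 hchar) -lt0n.
suff H : forall m, (0 < m)%N -> exists C : {poly k},
    C`_0 = a /\ forall i, (i < m)%N -> (C ^+ D)`_i = W`_i.
  have [C [h0 hC]] := H n.+1 (ltn0Sn n).
  by exists C; [rewrite h0 | move=> i hi; apply: hC].
elim => [|m IH] // _.
case: (posnP m) => [->|hm].
  exists a%:P; split; first by rewrite coefC.
  by move=> [|i] // _; rewrite -polyC_exp coefC.
have [C [hC0 hC]] := IH hm.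
have hm0 : (0 == m)%N = false by rewrite eq_sym; apply/negbTE; rewrite -lt0n.
pose t := (W`_m - (C ^+ D)`_m) / (D%:R * a ^+ D.-1).
exists (C + t *: 'X^m); split.
  by rewrite coefD coefZ coefXn hm0 mulr0 addr0.
have e : (C + t *: 'X^m) ^+ D = C ^+ D + 'X^m * ((t%:P) * \sum_(i < D) (C + t *: 'X^m) ^+ (D.-1 - i) * C ^+ i).
  rewrite -[LHS](subrK (C ^+ D)) subrXX addrC; congr (_ + _).
  have -> : C + t *: 'X^m - C = t *: 'X^m by rewrite addrC addKr.
  by rewrite -mul_polyC -mulrA mulrCA.
move=> i hi; rewrite e coefD coefXnM.
case: ltnP => hmi; first by rewrite addr0; apply: hC.
have -> : i = m by lia.
rewrite subnn coef0M coefC /= coef_sum.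
rewrite (eq_bigr (fun _ => a ^+ D.-1)); last first.
  move=> j _; rewrite coef0M -!horner_coef0 !horner_exp !horner_coef0 coefD coefZ coefXn hC0.
  rewrite hm0 mulr0 addr0.
  by rewrite -exprD subnK //; have := ltn_ord j; lia.
rewrite sumr_const card_ord /t -[a ^+ D.-1 *+ D]mulr_natl divfK //.
by rewrite addrC subrK.
Qed.

End M_L.
Import M_L.

Module M_G.
Set Implicit Arguments. Unset Strict Implicit. Unset Printing Implicit Defensive.
Local Open Scope ring_scope.

Section Gen.
Variable k : fieldType.
Variables d n : nat.

Lemma Theta_ext' (u v : nat -> 'cV[k]_n) : (forall j, u j = v j) -> Theta d u = Theta d v.
Proof. by move=> h; rewrite /Theta; apply: eq_bigr => t _; apply: eq_bigr => j _; rewrite h. Qed.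

Lemma Orth_inv (s : 'M[k]_n) : Orth d s -> Orth d (invmx s).
Proof.
move=> [hs ho]; split; first by rewrite unitmx_inv.
move=> u; rewrite -ho; apply: Theta_ext' => j; by rewrite mulKVmx.
Qed.

Lemma Cent_conj (s f : 'M[k]_n) : Orth d s -> Cent d f -> Cent d (chi s f).
Proof.
move=> [hs ho] hf u.
pose u' := fun j => invmx s *m u j.
have e : forall i, Theta d (upd i (chi s f) u) = Theta d (upd i f u').
  move=> i; rewrite -(ho (upd i f u')); apply: Theta_ext' => j; rewrite /upd /chi /u'.
  case: eqP => _; first by rewrite !mulmxA.
  by rewrite mulKVmx.
by rewrite !e.
Qed.

Lemma chi_inj (s f g : 'M[k]_n) : s \in unitmx -> chi s f = chi s g -> f = g.
Proof.
move=> hs; rewrite /chi => h.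
have := congr1 (fun M => invmx s *m (M *m s)) h.
by rewrite !mulmxKV // !mulKmx.
Qed.

Lemma chiK (s g : 'M[k]_n) : s \in unitmx -> chi s (chi (invmx s) g) = g.
Proof. by move=> hs; rewrite /chi invmxK !mulmxA mulmxV // mul1mx mulmxK. Qed.

Lemma chi_aut (s : 'M[k]_n) : Orth d s -> CentAut d (chi s).
Proof.
move=> hO; have hs := hO.1.
split; first by move=> f; apply: Cent_conj.
split.
- by move=> f g _ _; apply: chi_inj.
- move=> g hg; exists (chi (invmx s) g); last exact: chiK.
  by apply: Cent_conj => //; apply: Orth_inv.
- by rewrite /chi mulmx1 mulmxV.
- by move=> a f g _ _; rewrite /chi mulmxDr mulmxDl -!scalemxAr -scalemxAl.
- by move=> f g _ _; rewrite /chi !mulmxA mulmxKV.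
Qed.

Lemma invmx_mul (s t : 'M[k]_n) : s \in unitmx -> t \in unitmx ->
  invmx (s *m t) = invmx t *m invmx s.
Proof.
move=> hs ht; have hst : s *m t \in unitmx by rewrite unitmx_mul hs.
have e : s *m t *m (invmx t *m invmx s) = 1%:M by rewrite mulmxA mulmxK // mulmxV.
by rewrite -[invmx (s *m t)]mulmx1 -e mulmxA mulVmx // mul1mx.
Qed.
End Gen.

End M_G.
Import M_G.

Module M_P5.
Set Implicit Arguments. Unset Strict Implicit. Unset Printing Implicit Defensive.
Local Open Scope ring_scope.

Lemma nat_neq0 (k : fieldType) (hchar : [pchar k] =i pred0) m : (0 < m)%N -> (m%:R : k) != 0.
Proof. by move=> hm; rewrite ((pcharf0P k).1 hchar) -lt0n. Qed.

Lemma char0_pow (k : fieldType) (hchar : [pchar k] =i pred0) (n D : nat) (c : {poly k}) :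
  (0 < D)%N -> (forall i, (i < n.+1)%N -> (c ^+ D)`_i = (i == 0%N)%:R) ->
  forall i, (0 < i < n.+1)%N -> c`_i = 0.
Proof.
move=> hD hc [|j] // /andP [_ hj].
set g := c ^+ D.
have e : c * g^`() = (g * c^`()) *+ D.
  rewrite /g deriv_exp mulrnAr mulrA (mulrC c) -mulrA -exprS prednK //.
  by rewrite mulrC.
have h1 : (c * g^`())`_j = 0.
  rewrite coefM big1 // => a _; rewrite coef_deriv hc /= ?mul0rn ?mulr0 //.
  have := ltn_ord a; lia.
have h2 : (g * c^`())`_j = c^`()`_j.
  rewrite coefM big_ord_recl /= subn0 hc // mul1r big1 ?addr0 // => a _.
  by rewrite hc /= ?mul0r //; have := ltn_ord a; rewrite /bump /=; lia.
move: h1; rewrite e coefMn h2 coef_deriv => /eqP.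
rewrite -mulr_natr mulf_eq0 (negbTE (nat_neq0 hchar hD)) orbF => /eqP /eqP.
rewrite -mulr_natr mulf_eq0 (negbTE (nat_neq0 hchar (ltn0Sn j))) orbF => /eqP //.
Qed.

Lemma char0_pow0 (k : fieldType) (n D : nat) (c : {poly k}) :
  (forall i, (i < n.+1)%N -> (c ^+ D)`_i = (i == 0%N)%:R) -> c`_0 ^+ D = 1.
Proof. by move=> h; rewrite -!horner_coef0 -horner_exp horner_coef0 h. Qed.

End M_P5.
Import M_P5.

Module M_P6.
Set Implicit Arguments. Unset Strict Implicit. Unset Printing Implicit Defensive.
Local Open Scope ring_scope.

Section P6.
Variable k : closedFieldType.
Hypothesis hchar : [pchar k] =i pred0.
Variables n d : nat.
Local Notation D := d.+3.
Variable phi : 'M[k]_n.+1 -> 'M[k]_n.+1.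
Hypothesis hphi : CentAut D phi.

Let Cl : forall f, Cent D f -> Cent D (phi f) := hphi.1.
Let Pinj := let: And5 a _ _ _ _ := hphi.2 in a.
Let Psurj := let: And5 _ a _ _ _ := hphi.2 in a.
Let P1 := let: And5 _ _ a _ _ := hphi.2 in a.
Let Plin := let: And5 _ _ _ a _ := hphi.2 in a.
Let Pmul := let: And5 _ _ _ _ a := hphi.2 in a.

Lemma Cent0 : Cent D (0 : 'M[k]_n.+1).
Proof. by have := @CentA k n d 0; rewrite hm0. Qed.

Lemma phi0 : phi 0 = 0.
Proof.
have := Plin 1 Cent0 Cent0; rewrite scale1r addr0 scale1r => h.
by symmetry; apply: (addrI (phi 0)); rewrite addr0 -h.
Qed.

Definition q := phi (hm n 'X).

Lemma phi_hm p : phi (hm n p) = horner_mx q p.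
Proof.
elim/poly_ind: p => [|p c IH]; first by rewrite hm0 phi0 rmorph0.
have hc : c *: hm n 1 = hm n (c%:P) by rewrite hm1 scalemx1 /hm horner_mx_C.
have e : hm n (p * 'X + c%:P) = 1 *: (hm n p *m hm n 'X) + (c *: hm n 1 + 0).
  by rewrite scale1r addr0 hc -hm_mul /hm rmorphD.
have CA := @CentA k n d.
rewrite e Plin; first last.
- by rewrite addr0 hc.
- by rewrite -hm_mul.
rewrite Plin; first last.
- exact: Cent0.
- exact: CA.
rewrite Pmul // IH phi0 hm1 P1 addr0 scale1r scalemx1.
by rewrite rmorphD rmorphM /= horner_mx_X horner_mx_C mulmxE.
Qed.

Let CA := @CentA k n d.

Lemma Cq : Cent D q.
Proof. exact: Cl (CA 'X). Qed.

Definition r := Pp (q *m Ev k n).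

Lemma q_hm : q = hm n r.
Proof. exact: CentE Cq. Qed.

Lemma hmXn : hm n ('X^(n.+1) : {poly k}) = 0.
Proof.
apply: mx_ext => x; rewrite hmP mul0mx -(Qv0 k n); apply: Q_teq => m hm1.
by rewrite coefXnM hm1 coef0.
Qed.

Lemma r0 : r`_0 = 0.
Proof.
have h : hm n (r ^+ n.+1) = 0.
  have -> : hm n (r ^+ n.+1) = (hm n r) ^+ n.+1 by rewrite /hm rmorphXn.
  have e : horner_mx q 'X^(n.+1) = q ^+ n.+1 by rewrite rmorphXn /= horner_mx_X.
  by rewrite -q_hm -e -phi_hm hmXn phi0.
have := hmE n (r ^+ n.+1); rewrite h mul0mx -(Qv0 k n) => /esym /teq_Q /(_ 0%N (ltn0Sn n)).
rewrite coef0 -horner_coef0 horner_exp horner_coef0 => /eqP.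
by rewrite expf_eq0 /= => /eqP.
Qed.

Definition T : 'M[k]_n.+1 := \matrix_(i, j) (horner_mx q ('X^(n - j)) *m Ev k n) i 0.

Lemma Tu (u : 'cV[k]_n.+1) : T *m u = phi (hm n (Pp u)) *m Ev k n.
Proof.
rewrite phi_hm PpE linear_sum /= mulmx_suml.
apply/matrixP => i j; rewrite ord1 !mxE summxE; apply: eq_bigr => l _.
rewrite !mxE linearZ /= mulr_suml; apply: eq_bigr => m _.
by rewrite !mxE; ring.
Qed.

Lemma T_hm p (x : 'cV[k]_n.+1) : T *m (hm n p *m x) = phi (hm n p) *m (T *m x).
Proof. by rewrite !Tu (hm_teq (P_hm p x)) hm_mul Pmul ?mulmxA. Qed.

Lemma T_unit : T \in unitmx.
Proof.
apply: ker_unit => x; rewrite Tu => h.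
have hf := CentE (Cl (CA (Pp x))); rewrite h Pp0 hm0 in hf.
have : hm n (Pp x) = hm n 0 by apply: Pinj => //; rewrite hf hm0 phi0.
by rewrite hm0 => h2; rewrite -(QPK x) -hmE h2 mul0mx.
Qed.

Definition W := \poly_(b < n.+1) (invmx T) 0 (inord b).

Lemma W_coef (v : 'cV[k]_n.+1) : (W * Pp v)`_n = (invmx T *m v) 0 0.
Proof.
rewrite coefM !mxE; apply: eq_bigr => j _.
rewrite coef_poly ltn_ord coefPp ltnS leq_subr subKn ?inord_val //.
by rewrite -ltnS.
Qed.

Lemma W_key G : (W * Pp (phi (hm n G) *m Ev k n))`_n = G`_n.
Proof.
by rewrite W_coef -(hm_teq (teqPQ G)) -Tu mulKmx ?T_unit // mxE subn0.
Qed.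

Lemma W0 : W`_0 != 0.
Proof.
have e : horner_mx q 'X^n = q ^+ n by rewrite rmorphXn /= horner_mx_X.
have e2 : (hm n r) ^+ n = hm n (r ^+ n) by rewrite /hm rmorphXn.
have := W_key 'X^n; rewrite coefXn eqxx phi_hm e q_hm e2.
rewrite hmE (teqMr W (teqPQ (r ^+ n))) //.
rewrite coefM big_ord_recl big1 ?addr0 /=; last first.
  by move=> j _; rewrite coef_pow_low ?r0 ?mulr0 //; rewrite /bump /=; have := ltn_ord j; lia.
move=> h; apply/eqP => e0; move: h; rewrite e0 mul0r => /eqP; by rewrite eq_sym oner_eq0.
Qed.

Lemma surj_main : exists2 s : 'M[k]_n.+1, Orth D s & forall f, Cent D f -> phi f = chi s f.
Proof.
have [C hC0 hCW] := droot hchar n (ltn0Sn d.+2) W0.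
set s := hm n C *m T.
have hCu : hm n C \in unitmx.
  apply: ker_unit => x; rewrite hmP -(Qv0 k n) => /teq_Q h.
  have h2 : teq n (Pp x) 0 by apply: (teq_cancel hC0); rewrite mulrC.
  by rewrite -(QPK x) (Q_teq h2) Qv0.
have hsu : s \in unitmx by rewrite unitmx_mul hCu T_unit.
have inter : forall p, s *m hm n p = phi (hm n p) *m s.
  move=> p; apply: mx_ext => x; rewrite /s -!mulmxA T_hm.
  rewrite (CentE (Cl (CA p))) !mulmxA; congr (_ *m _ *m _); exact: hm_comm.
exists s; last by move=> f hf; rewrite (CentE hf) /chi inter mulmxK.
split => // u.
rewrite (ThetaP _ (ltn0Sn _)) [in RHS](ThetaP _ (ltn0Sn _)).
set G := \prod_(j < D) Pp (u j).
pose g j := Pp (phi (hm n (Pp (u j))) *m Ev k n).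
have hg : forall j, phi (hm n (Pp (u j))) = hm n (g j) := fun j => CentE (Cl (CA _)).
have e1 : forall j, s *m u j = Qv n (C * g j).
  by move=> j; rewrite /s -mulmxA Tu hg hmE hmQ.
rewrite (eq_bigr (fun j : 'I_D => Pp (Qv n (C * g j)))); last by move=> j _; rewrite e1.
have H1 : teq n (\prod_(j < D) Pp (Qv n (C * g j))) (\prod_(j < D) (C * g j)).
  by apply: teq_prod => j; apply: teqPQ.
rewrite H1 // big_split /= prodr_const card_ord (teqMl _ hCW) //.
have hG : hm n (\prod_(j < D) g j) = phi (hm n G).
  rewrite /hm rmorph_prod phi_hm /G rmorph_prod; apply: eq_bigr => j _.
  exact: (esym (etrans (esym (phi_hm _)) (hg j))).
by rewrite -(teqMr W (teqPQ (n:=n) (\prod_(j < D) g j))) // -hmE hG W_key.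
Qed.

End P6.

End M_P6.
Import M_P6.

Theorem theorem4p3 (k : closedFieldType) (d n : nat)
  (hchar : [pchar k] =i pred0) (hd : (3 <= d)%N) (hn : (2 <= n)%N) :
  (forall z : k, z ^+ d = 1 -> Orth d (z%:M : 'M[k]_n)) /\
  (forall z1 z2 : k, (z1%:M : 'M[k]_n) = z2%:M -> z1 = z2) /\
  (forall s : 'M[k]_n, Orth d s -> CentAut d (chi s)) /\
  (forall s t : 'M[k]_n, Orth d s -> Orth d t ->
     forall f, Cent d f -> chi (s *m t) f = chi s (chi t f)) /\
  (forall s : 'M[k]_n, Orth d s ->
     ((forall f, Cent d f -> chi s f = f) <-> exists2 z : k, z ^+ d = 1 & s = z%:M)) /\
  (forall phi : 'M[k]_n -> 'M[k]_n, CentAut d phi ->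
     exists2 s : 'M[k]_n, Orth d s & forall f, Cent d f -> phi f = chi s f).
Proof.
case: n hn => [|[|n]] // _.
case: d hd => [|[|[|d]]] // _.
split.
  move=> z hz.
  have z0 : z != 0.
    by apply/eqP => z0; move: hz; rewrite z0 expr0n /= => /eqP; rewrite eq_sym oner_eq0.
  split; first by rewrite unitmxE det_scalar unitfE expf_neq0.
  move=> u; rewrite /Theta; apply: eq_bigr => t _.
  rewrite (eq_bigr (fun j : 'I_d.+3 => z * u j (t j) 0)); last by move=> j _; rewrite mul_scalar_mx mxE.
  by rewrite big_split /= prodr_const card_ord hz mul1r.
split.
  by move=> z1 z2 /matrixP /(_ 0 0); rewrite !mxE eqxx /= !mulr1n.
split; first by move=> s hs; apply: chi_aut.
split.
  move=> s t hs ht f _; rewrite /chi invmx_mul ?hs.1 ?ht.1 //.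
  by rewrite !mulmxA.
split.
  move=> s hs; split.
    move=> h.
    have comm : forall p, s *m hm n.+1 p = hm n.+1 p *m s.
      move=> p; have := h _ (CentA _ p); rewrite /chi => e.
      by rewrite -{2}e mulmxKV // hs.1.
    have sE : s = hm n.+1 (Pp (s *m Ev k n.+1)).
      apply: mx_ext => x; rewrite hmP -[X in s *m X = _](QPK x) -(hmE n.+1 (Pp x)).
      by rewrite mulmxA comm -mulmxA hmP mulrC.
    set c := Pp (s *m Ev k n.+1) in sE.
    have hc : forall i, (i < n.+2)%N -> (c ^+ d.+3)`_i = (i == 0%N)%:R.
      move=> i hi.
      have := hs.2 (fun j => if j == 0%N then Qv n.+1 'X^(n.+1 - i) else Ev k n.+1).
      rewrite {1}sE Theta_hm Theta_one prod_one.
      rewrite (teqMr _ (teqPQ _)) // (teqPQ _) //.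
      have hi' : (i <= n.+1)%N by rewrite -ltnS.
      rewrite coefMXn coefXn ltnNge leq_subr /= subKn // => ->.
      congr (_%:R); apply/eqP/eqP; lia.
    have c0 := char0_pow0 hc.
    have ci := char0_pow hchar (ltn0Sn _) hc.
    exists c`_0 => //.
    rewrite sE (@hm_teq _ _ c (c`_0)%:P) /hm ?horner_mx_C // => m hm1.
    rewrite coefC; case: m hm1 => [|m] hm1 //=.
    by apply: ci.
  case=> z hz e f _; have hu : (z%:M : 'M[k]_n.+2) \in unitmx by rewrite -e; case: hs.
  by rewrite /chi e -scalar_mxC -mulmxA mulmxV // mulmx1.
move=> phi hphi; exact: (@surj_main k hchar n.+1 d phi hphi).
Qed.
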